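(* $\mathcal M\subset(\gamma\mathcal S)^{\#}=(\tilde\gamma(\mathcal S^* ))^{\#}$. In particular, for every mild mixing system $(X,T)$, all nonempty open $U,V\subset X$, and every $A\subset\mathbb N$ containing a translate of an SIP set, the set $N(U,V)\cap A$ contains a translate of an SIP set.
   Context: A dynamical system $(X,T)$: $X$ compact metric, $T$ a homeomorphism. $\mathbb N=\{1,2,\dots\}$; $N(U,V)=\{n\in\mathbb N:T^n(U)\cap V\ne\emptyset\}$. For finite $F\subset\mathbb Z$, $\sigma_F$ is the sum of its elements ($\sigma_\emptyset=0$); $IP(A)=\{\sigma_F:F\subset A\text{ finite}\}$, $SIP(A)=\{a-b:a,b\in IP(A)\}$. A family on $\mathbb N$ is a collection of subsets closed under supersets; its dual is $\mathcal F^*=\{B: B\cap A\ne\emptyset\ \forall A\in\mathcal F\}$; its sharp dual is $\mathcal F^{\#}=\{A: A\cap B\in\mathcal F\ \forall B\in\mathcal F\}$. $\mathcal S$ is the family of SIP sets: $B\subset\mathbb N$ with $SIP(L)\cap\mathbb N\subset B$ for some infinite $L\subset\mathbb N$. $\gamma\mathcal S$ is the family of sets containing a translate of an SIP set, i.e. $B\subset\mathbb N$ such that $(SIP(L)+u)\cap\mathbb N\subset B$ for some infinite $L\subset\mathbb N$, $u\in\mathbb Z$. For a family $\mathcal F$, $\tilde\gamma\mathcal F=\{A\subset\mathbb N:(A+n)\cap\mathbb N\in\mathcal F\text{ for all }n\in\mathbb Z\}$. A system is mild mixing if for all nonempty open $U,V$, $N(U,V)\in\mathcal S^*$. $\mathcal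 M$ is the family of subsets of $\mathbb N$ containing some $N(U,V)$ with $(X,T)$ mild mixing and $U,V\subset X$ nonempty open. *)

(* Defs.v *)
From HB Require Import structures.
From mathcomp Require Import all_boot all_order all_algebra.
From mathcomp Require Import all_classical all_reals all_analysis.
From mathcomp Require Import Rstruct Rstruct_topology.
Set Implicit Arguments. Unset Strict Implicit. Unset Printing Implicit Defensive.
Import Order.TTheory GRing.Theory Num.Theory.
Local Open Scope classical_set_scope.
Local Open Scope ring_scope.

(* Subsets of N = {1,2,...} are represented as sets of nat contained in Npos. *)
Definition Npos : set nat := [set n | (0 < n)%N].

Definition IP (L : set nat) : set int :=
  [set z | exists s : seq nat, uniq s /\ (forall x, x \in s -> L x) /\
           z = ((\sum_(x <- s) x)%N)%:Z].

Definition SIP (L : set nat) : set int :=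
  [set z | exists a b, IP L a /\ IP L b /\ z = a - b].

Definition Sfam : set (set nat) := [set B | B `<=` Npos /\
  exists L : set nat, L `<=` Npos /\ infinite_set L /\
    (forall n : nat, (0 < n)%N -> SIP L n%:Z -> B n)].

Definition gammaS : set (set nat) := [set B | B `<=` Npos /\
  exists (L : set nat) (u : int), L `<=` Npos /\ infinite_set L /\
    (forall n : nat, (0 < n)%N -> (exists z, SIP L z /\ n%:Z = z + u) -> B n)].

Definition shiftN (A : set nat) (n : int) : set nat :=
  [set m | (0 < m)%N /\ exists a, A a /\ m%:Z = a%:Z + n].

Definition gtilde (F : set (set nat)) : set (set nat) :=
  [set A | A `<=` Npos /\ forall n : int, F (shiftN A n)].

Definition dualF (F : set (set nat)) : set (set nat) :=
  [set B | B `<=` Npos /\ forall A, F A -> B `&` A !=set0].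

Definition sharpF (F : set (set nat)) : set (set nat) :=
  [set A | A `<=` Npos /\ forall B, F B -> F (A `&` B)].

Definition Nret (X : Type) (T : X -> X) (U V : set X) : set nat :=
  [set n | (0 < n)%N /\ (iter n T @` U) `&` V !=set0].

Definition homeomorphism (X : topologicalType) (T : X -> X) : Prop :=
  exists Tinv : X -> X, [/\ cancel T Tinv, cancel Tinv T,
                           continuous T & continuous Tinv].

(* (X,T) is a dynamical system: X compact metric (Hausdorff pseudometric
   space over the reals), T a homeomorphism. *)
Definition dyn_system (X : pseudoMetricType Rdefinitions.R) (T : X -> X) : Prop :=
  [/\ hausdorff_space X, compact [set: X] & homeomorphism T].

Definition mild_mixing (X : pseudoMetricType Rdefinitions.R) (T : X -> X) : Prop :=
  forall U V : set X, open U -> U !=set0 -> open V -> V !=set0 ->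
    dualF Sfam (Nret T U V).

Definition Mfam : set (set nat) := [set A | A `<=` Npos /\
  exists (X : pseudoMetricType Rdefinitions.R) (T : X -> X) (U V : set X),
    [/\ dyn_system T, mild_mixing T, open U /\ U !=set0,
        open V /\ V !=set0 & Nret T U V `<=` A]].

(* Main.v *)
Require Import Defs.
From mathcomp Require Import all_boot all_order all_algebra.
From mathcomp Require Import all_classical all_reals all_analysis.
From mathcomp Require Import Rstruct Rstruct_topology.
From mathcomp Require Import zify.
Set Implicit Arguments. Unset Strict Implicit. Unset Printing Implicit Defensive.
Import Order.TTheory GRing.Theory Num.Theory.
Local Open Scope classical_set_scope.

Local Open Scope ring_scope.

Lemma mem_le_sum (s : seq nat) x : x \in s -> (x <= \sum_(y <- s) y)%N.
Proof.
elim: s => //= y s IH; rewrite inE big_cons => /orP [/eqP->|/IH h].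
  exact: leq_addr.
exact: leq_trans h (leq_addl _ _).
Qed.

Lemma L1 (p : nat -> nat) (P : nat -> int -> Prop) (z0 : int) :
  P 0%N z0 ->
  (forall k z, P k z -> [/\ P k.+1 z, P k.+1 (z + (p k)%:Z) & P k.+1 (z - (p k)%:Z)]) ->
  forall K (s t : seq nat), uniq s -> uniq t ->
  (forall x, x \in s -> exists2 i, (i < K)%N & x = p i) ->
  (forall x, x \in t -> exists2 i, (i < K)%N & x = p i) ->
  P K (z0 + (\sum_(x <- s) x)%N%:Z - (\sum_(x <- t) x)%N%:Z).
Proof.
move=> P0 Pstep; elim=> [|K IH] s t us ut hs ht.
  have -> : s = [::].
    case: s hs {us} => // x s /(_ x); rewrite inE eqxx => /(_ isT) [i].
    by rewrite ltn0.
  have -> : t = [::].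
    case: t ht {ut} => // x t /(_ x); rewrite inE eqxx => /(_ isT) [i].
    by rewrite ltn0.
  by rewrite !big_nil subr0 addr0.
set s0 := [seq x <- s | x != p K].
set t0 := [seq x <- t | x != p K].
have h0 : forall r, (forall x, x \in r -> exists2 i, (i < K.+1)%N & x = p i) ->
    forall x, x \in [seq x <- r | x != p K] -> exists2 i, (i < K)%N & x = p i.
  move=> r hr x; rewrite mem_filter => /andP [xn xr].
  have [i iK xi] := hr x xr; exists i => //.
  rewrite ltnS leq_eqVlt in iK; case/orP: iK => // /eqP ei.
  by move: xn; rewrite xi ei eqxx.
have IH0 := IH s0 t0 (filter_uniq _ us) (filter_uniq _ ut) (h0 _ hs) (h0 _ ht).
have [Pa Pb Pc] : [/\ P K.+1 (z0 + (\sum_(x <- s0) x)%N%:Z - (\sum_(x <- t0) x)%N%:Z),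
   P K.+1 (z0 + (\sum_(x <- s0) x)%N%:Z - (\sum_(x <- t0) x)%N%:Z + (p K)%:Z) &
   P K.+1 (z0 + (\sum_(x <- s0) x)%N%:Z - (\sum_(x <- t0) x)%N%:Z - (p K)%:Z)].
  by case: (Pstep _ _ IH0).
have sumE : forall r, uniq r -> (\sum_(x <- r) x)%N =
    ((if p K \in r then p K else 0) + \sum_(x <- [seq x <- r | x != p K]) x)%N.
  move=> r ur; case: ifP => hin.
    by rewrite big_filter (bigD1_seq (p K)).
  rewrite add0n (all_filterP _) //; apply/allP => x xr; apply/eqP => e.
  by rewrite -e xr in hin.
rewrite (sumE s us) (sumE t ut).
case: ifP => _; case: ifP => _.
- by have -> : forall a b c : nat, (z0 + (c + a)%N%:Z - (c + b)%N%:Z) = (z0 + a%:Z - b%:Z) by move=> *; lia.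
- by have -> : forall a b c : nat, (z0 + (c + a)%N%:Z - (0 + b)%N%:Z) = (z0 + a%:Z - b%:Z + c%:Z) by move=> *; lia.
- by have -> : forall a b c : nat, (z0 + (0 + a)%N%:Z - (c + b)%N%:Z) = (z0 + a%:Z - b%:Z - c%:Z) by move=> *; lia.
- by have -> : forall a b : nat, (z0 + (0 + a)%N%:Z - (0 + b)%N%:Z) = (z0 + a%:Z - b%:Z) by move=> *; lia.
Qed.

Lemma unbounded_inf (L : set nat) : infinite_set L ->
  forall N, exists x, L x /\ (N < x)%N.
Proof.
move=> infL N; apply: contrapT => hn; apply: infL.
apply: (sub_finite_set _ (finite_II N.+1)) => x Lx /=.
rewrite ltnS leqNgt; apply/negP => Nx; apply: hn; by exists x.
Qed.

Lemma inf_unbounded (Q : set nat) : (forall N, exists x, Q x /\ (N < x)%N) ->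
  infinite_set Q.
Proof.
move=> hQ /finite_seqP [s sQ].
have [x [Qx lt]] := hQ (\sum_(y <- s) y)%N.
move: Qx; rewrite sQ /= => /mem_le_sum; by rewrite leqNgt lt.
Qed.

Lemma bound_idx (p : nat -> nat) (s : seq nat) :
  (forall x, x \in s -> exists i, x = p i) ->
  exists K, forall x, x \in s -> exists2 i, (i < K)%N & x = p i.
Proof.
elim: s => [|y s IH] h; first by exists 0%N.
have [K hK] : exists K, forall x, x \in s -> exists2 i, (i < K)%N & x = p i.
  by apply: IH => x xs; apply: h; rewrite inE xs orbT.
have [j yj] := h y (mem_head _ _).
exists (maxn K j.+1) => x; rewrite inE => /orP [/eqP ->|xs].
  by exists j => //; rewrite leq_max ltnSn orbT.
by have [i iK ->] := hK x xs; exists i => //; rewrite leq_max iK.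
Qed.

Lemma IP_idx (Q : set nat) (p : nat -> nat) a : (forall x, Q x -> exists i, x = p i) ->
  IP Q a -> exists s, [/\ uniq s, (forall x, x \in s -> exists i, x = p i) &
      a = (\sum_(x <- s) x)%N%:Z].
Proof.
move=> hQ [s [us [sQ ->]]]; exists s; split => // x /sQ; exact: hQ.
Qed.

Lemma SIP_L1 (Q : set nat) (p : nat -> nat) (P : nat -> int -> Prop) (z0 : int) :
  (forall x, Q x -> exists i, x = p i) ->
  P 0%N z0 ->
  (forall k z, P k z -> [/\ P k.+1 z, P k.+1 (z + (p k)%:Z) & P k.+1 (z - (p k)%:Z)]) ->
  (forall k z, P k z -> P k.+1 z) ->
  forall z, SIP Q z -> exists K, P K (z0 + z).
Proof.
move=> hQ P0 Pst _ z [a [b [Ia [Ib ->]]]].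
have [s [us hs ->]] := IP_idx hQ Ia.
have [t [ut ht ->]] := IP_idx hQ Ib.
have hst : forall x, x \in s ++ t -> exists i, x = p i.
  by move=> x; rewrite mem_cat => /orP [/hs|/ht].
have [K hK] := bound_idx hst.
exists K; rewrite addrA; apply: (L1 (p := p)) => //.
  by move=> x xs; apply: hK; rewrite mem_cat xs.
by move=> x xs; apply: hK; rewrite mem_cat xs orbT.
Qed.

Lemma superinc (L : set nat) (m K : nat) : infinite_set L ->
  exists Q : set nat, [/\ Q `<=` L, infinite_set Q, (forall x, Q x -> (m < x)%N)
     & forall z, SIP Q z -> z = 0 \/ K%:Z < z \/ z < - K%:Z].
Proof.
move=> /unbounded_inf /choice [g hg].
pose fix h j := if j is j'.+1 then (h j' + g (K + m + h j'))%N else 0%N.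
pose q j := g (K + m + h j).
have hq j : L (q j) /\ (K + m + h j < q j)%N by exact: hg.
have hj j : (j <= h j)%N.
  elim: j => // j IH /=; have [_ lt] := hq j; rewrite -/(q j); lia.
exists [set x | exists j, x = q j]; split.
- by move=> x [j ->]; case: (hq j).
- apply: inf_unbounded => N; exists (q N); split; first by exists N.
  have [_ lt] := hq N; have := hj N; lia.
- by move=> x [j ->]; have [_ lt] := hq j; lia.
move=> z hz.
pose P J (z : int) := - (h J)%:Z <= z <= (h J)%:Z /\ (0 < z -> K%:Z < z) /\ (z < 0 -> z < - K%:Z).
have Pst : forall k z, P k z -> [/\ P k.+1 z, P k.+1 (z + (q k)%:Z) & P k.+1 (z - (q k)%:Z)].
  move=> k z' [bd [p1 p2]]; have [_ lt] := hq k; rewrite /P /= -/(q k).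
  split; split; lia.
have P00 : P 0%N 0 by rewrite /P /=; lia.
have [J PJ] := SIP_L1 (p := q) (P := P) (z0 := 0) (Q := [set x | exists j, x = q j])
   (fun x h => h) P00 Pst (fun k z h => let: And3 a _ _ := Pst k z h in a) hz.
move: PJ; rewrite add0r /P; lia.
Qed.

Definition upclosed (F : set (set nat)) :=
  (forall B, F B -> B `<=` Npos) /\
  forall B B', F B -> B `<=` B' -> B' `<=` Npos -> F B'.

Lemma bidual (F : set (set nat)) : upclosed F -> forall D, D `<=` Npos ->
  (forall C, dualF F C -> D `&` C !=set0) -> F D.
Proof.
move=> [Fpos upF] D Dpos hD; apply: contrapT => nFD.
have hC : dualF F (Npos `\` D).
  split; first by move=> x [].
  move=> B FB; apply: contrapT => hB; apply: nFD; apply: (upF B) => //.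
  move=> x Bx; apply: contrapT => nDx; apply: hB; exists x; split=> //.
  by split=> //; exact: Fpos Bx.
by have [x [Dx [_ nDx]]] := hD _ hC.
Qed.

Lemma sharp_dual (F : set (set nat)) : upclosed F -> sharpF F = sharpF (dualF F).
Proof.
move=> upF; apply/seteqP; split => A [Apos hA]; split => //.
- move=> C [Cpos hC]; split; first by move=> x [_ /Cpos].
  move=> B FB; have [x [Cx [Ax Bx]]] := hC _ (hA B FB).
  by exists x; split; first split.
- move=> B FB; apply: bidual => //; first by move=> x [/Apos].
  move=> C dC; have [_ h] := hA C dC.
  have [x [[Ax Cx] Bx]] := h B FB.
  by exists x; split; first split.
Qed.

Lemma gammaS_up : upclosed gammaS.
Proof.
split; first by move=> B [].
move=> B B' [Bpos [L [u [Lpos [infL hB]]]]] BB' B'pos; split => //.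
exists L, u; split => //; split => // n n0 h; exact/BB'/hB.
Qed.

Local Open Scope ring_scope.

Lemma SIPL_Sfam (L : set nat) : L `<=` Npos -> infinite_set L ->
  Sfam [set k | (0 < k)%N /\ SIP L k%:Z].
Proof.
move=> Lpos infL; split; first by move=> x [].
by exists L; split => //; split => // n n0 h.
Qed.

Lemma gt_dual : gtilde (dualF Sfam) = dualF gammaS.
Proof.
apply/seteqP; split => C [Cpos hC]; split => //.
- move=> B [Bpos [L [u [Lpos [infL hB]]]]].
  have [_ h] := hC (- u).
  have [k [[k0 [a [Ca ka]]] [_ sk]]] := h _ (SIPL_Sfam Lpos infL).
  exists a; split => //; apply: hB; first exact: Cpos.
  by exists k%:Z; split => //; rewrite ka; lia.
- move=> n; split; first by move=> x [].
  move=> B [Bpos [L [Lpos [infL hB]]]].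
  have [w [Lw w0]] := unbounded_inf infL 0.
  have [Q [QL infQ Qw hQ]] := superinc w (w + `|n| + 1)%N infL.
  pose B'' := [set k | (0 < k)%N /\ exists z, SIP Q z /\ k%:Z = z + (w%:Z - n)].
  have gB : gammaS B''.
    split; first by move=> x [].
    exists Q, (w%:Z - n); split; first by move=> x /QL /Lpos.
    by split => // k k0 hk; split.
  have [a [Ca [a0 [z [sz az]]]]] := hC _ gB.
  have zw : 0 < z + w%:Z.
    case: (hQ z sz) => [z0|[hz|hz]]; [rewrite z0; lia|lia|lia].
  exists (absz (z + w%:Z)); split.
    split; first lia.
    by exists a; split => //; lia.
  apply: hB; first lia.
  move: sz zw => [a1 [b1 [[s [us [sQ ->]]] [Ib ->]]]] zw.
  have -> : (absz ((\sum_(x <- s) x)%N%:Z - b1 + w%:Z))%:Z = (\sum_(x <- w :: s) x)%N%:Z - b1.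
    rewrite big_cons; lia.
  exists (\sum_(x <- w :: s) x)%N%:Z, b1; split => //.
  - exists (w :: s); split => //.
      rewrite /= us andbT; apply/negP => /sQ /Qw; by rewrite ltnn.
    by split => // x; rewrite inE => /orP [/eqP ->|/sQ /QL].
  - split => //; by case: Ib => t [ut [tQ ->]]; exists t; split => //; split => // x /tQ /QL.
Qed.
Local Open Scope ring_scope.

Definition Tz {X : Type} (T Tinv : X -> X) (z : int) : X -> X :=
  match z with Posz n => iter n T | Negz n => iter n.+1 Tinv end.

Lemma int_ind3 (P : int -> Prop) : P 0 -> (forall z, P z -> P (z + 1)) ->
  (forall z, P z -> P (z - 1)) -> forall z, P z.
Proof.
move=> P0 Pp Pm; case=> n.
  elim: n => // n IH; have -> : Posz n.+1 = Posz n + 1 by lia.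
  exact: Pp.
elim: n => [|n IH].
  have -> : Negz 0 = 0 - 1 by lia.
  exact: Pm.
have -> : Negz n.+1 = Negz n - 1 by lia.
exact: Pm.
Qed.

Lemma TzS {X : Type} (T Tinv : X -> X) : cancel Tinv T ->
  forall z x, Tz T Tinv (z + 1) x = T (Tz T Tinv z x).
Proof.
move=> K2; case=> n x.
  by have -> : Posz n + 1 = Posz n.+1 by lia.
case: n => [|n].
  have -> : Negz 0 + 1 = 0 by lia.
  by rewrite /= K2.
have -> : Negz n.+1 + 1 = Negz n by lia.
by rewrite [in RHS]/= K2.
Qed.

Lemma TzP {X : Type} (T Tinv : X -> X) : cancel T Tinv ->
  forall z x, Tz T Tinv (z - 1) x = Tinv (Tz T Tinv z x).
Proof.
move=> K1; case=> n x.
  case: n => [|n].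
    by have -> : Posz 0 - 1 = Negz 0 by lia.
  have -> : Posz n.+1 - 1 = Posz n by lia.
  by rewrite [in RHS]/= K1.
by have -> : Negz n - 1 = Negz n.+1 by lia.
Qed.

Lemma TzD {X : Type} (T Tinv : X -> X) : cancel T Tinv -> cancel Tinv T ->
  forall a b x, Tz T Tinv (a + b) x = Tz T Tinv a (Tz T Tinv b x).
Proof.
move=> K1 K2 a b x; move: a; apply: int_ind3.
- by rewrite add0r.
- move=> z IH; rewrite (TzS K2) -IH -(TzS K2); congr Tz; lia.
- move=> z IH; rewrite (TzP K1) -IH -(TzP K1); congr Tz; lia.
Qed.

Lemma iter_cont {X : topologicalType} (f : X -> X) : continuous f -> forall n, continuous (iter n f).
Proof.
move=> cf; elim=> [|n IH] x.
  exact: (@cvg_id _ (nbhs x)).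
change ({for x, continuous (f \o iter n f)}).
apply: continuous_comp; [exact: IH | exact: cf].
Qed.

Lemma Tz_cont {X : topologicalType} (T Tinv : X -> X) : continuous T -> continuous Tinv ->
  forall z, continuous (Tz T Tinv z).
Proof. move=> c1 c2 [n|n]; exact: iter_cont. Qed.

Lemma open_pre {X : topologicalType} (f : X -> X) (V : set X) : continuous f -> open V -> open (f @^-1` V).
Proof. move=> cf oV; apply: open_comp => // x _; exact: cf. Qed.

Definition SIPb (L : set nat) (m : nat) (r : int) := exists s t : seq nat,
  [/\ uniq s, uniq t, (forall x, x \in s -> L x /\ (x < m)%N),
      (forall x, x \in t -> L x /\ (x < m)%N) &
      r = (\sum_(x <- s) x)%N%:Z - (\sum_(x <- t) x)%N%:Z].

Lemma SIPb_SIP L m r : SIPb L m r -> SIP L r.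
Proof.
move=> [s [t [us ut hs ht ->]]].
exists (\sum_(x <- s) x)%N%:Z, (\sum_(x <- t) x)%N%:Z; split; last split => //.
  by exists s; split => //; split => // x /hs [].
by exists t; split => //; split => // x /ht [].
Qed.

Lemma SIPb_mono L m m' r : (m <= m')%N -> SIPb L m r -> SIPb L m' r.
Proof.
move=> mm [s [t [us ut hs ht ->]]]; exists s, t; split => //.
  by move=> x /hs [Lx xm]; split => //; exact: leq_trans xm mm.
by move=> x /ht [Lx xm]; split => //; exact: leq_trans xm mm.
Qed.

Lemma SIP_block (Q L : set nat) m r : Q `<=` L -> (forall x, Q x -> (m < x)%N) -> SIP Q r ->
  exists m' (s t : seq nat), [/\ uniq s, uniq t, (forall x, x \in s -> [/\ L x, (m < x)%N & (x < m')%N]),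
      (forall x, x \in t -> [/\ L x, (m < x)%N & (x < m')%N]) &
      r = (\sum_(x <- s) x)%N%:Z - (\sum_(x <- t) x)%N%:Z].
Proof.
move=> QL Qm [a [b [[s [us [sQ ->]]] [[t [ut [tQ ->]]] ->]]]].
exists (\sum_(x <- s) x + \sum_(x <- t) x).+1%N, s, t; split => //.
  move=> x xs; have := mem_le_sum xs; split; [exact/QL/sQ|exact/Qm/sQ|lia].
move=> x xs; have := mem_le_sum xs; split; [exact/QL/tQ|exact/Qm/tQ|lia].
Qed.



Lemma SIPb_add L m m' r (s' t' : seq nat) : (m <= m')%N -> SIPb L m r -> uniq s' -> uniq t' ->
  (forall x, x \in s' -> [/\ L x, (m < x)%N & (x < m')%N]) ->
  (forall x, x \in t' -> [/\ L x, (m < x)%N & (x < m')%N]) ->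
  SIPb L m' (r + ((\sum_(x <- s') x)%N%:Z - (\sum_(x <- t') x)%N%:Z)) /\
  SIPb L m' (r - ((\sum_(x <- s') x)%N%:Z - (\sum_(x <- t') x)%N%:Z)).
Proof.
move=> mm [s [t [us ut hs ht ->]]] us' ut' hs' ht'.
have hcat : forall s1 s2 : seq nat, uniq s1 -> uniq s2 -> (forall x, x \in s1 -> L x /\ (x < m)%N) ->
    (forall x, x \in s2 -> [/\ L x, (m < x)%N & (x < m')%N]) ->
    uniq (s1 ++ s2) /\ (forall x, x \in s1 ++ s2 -> L x /\ (x < m')%N).
  move=> s1 s2 u1 u2 h1 h2; split.
    rewrite cat_uniq u1 u2 andbT /=; apply/hasPn => x /h2 [_ mx _].
    by apply/negP => /h1 [_ xm]; move: (ltn_trans mx xm); rewrite ltnn.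
  move=> x; rewrite mem_cat => /orP [/h1 [Lx xm]|/h2 [Lx _ xm]]; split => //.
  exact: leq_trans xm mm.
have [u1 c1] := hcat _ _ us us' hs hs'.
have [u2 c2] := hcat _ _ ut ut' ht ht'.
have [u3 c3] := hcat _ _ us ut' hs ht'.
have [u4 c4] := hcat _ _ ut us' ht hs'.
split.
  exists (s ++ s'), (t ++ t'); split => //; rewrite !big_cat /=; lia.
exists (s ++ t'), (t ++ s'); split => //; rewrite !big_cat /=; lia.
Qed.

Lemma Sfam_Npos : Sfam Npos.
Proof.
split => //; exists Npos; split => //; split => //.
apply: inf_unbounded => N; exists N.+1; split => //.
Qed.

Lemma mm_use (X : pseudoMetricType Rdefinitions.R) (T : X -> X) (O1 O2 : set X) (B : set nat) :
  mild_mixing T -> open O1 -> O1 !=set0 -> open O2 -> O2 !=set0 -> Sfam B ->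
  exists n, [/\ (0 < n)%N, B n & exists x, O1 x /\ O2 (iter n T x)].
Proof.
move=> mm o1 n1 o2 n2 SB; have [_ h] := mm O1 O2 o1 n1 o2 n2.
have [n [[n0 [y [[x Ox e] O2y]]] Bn]] := h B SB.
by exists n; split => //; exists x; split => //; rewrite e.
Qed.

Lemma Wlem (X : pseudoMetricType Rdefinitions.R) (T Tinv : X -> X) :
  cancel T Tinv -> cancel Tinv T -> continuous T -> continuous Tinv -> mild_mixing T ->
  forall (O : int -> set X) (zs : seq int) (U0 : set X), open U0 -> U0 !=set0 ->
  (forall r, r \in zs -> open (O r) /\ O r !=set0) ->
  exists W : set X, [/\ open W, W !=set0 &
    forall q : int, (exists y, W y /\ W (Tz T Tinv q y)) ->
      forall r, r \in zs -> exists y, O r y /\ O r (Tz T Tinv q y)].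
Proof.
move=> K1 K2 cT cTi mm O; elim=> [|r zs IH] U0 oU nU hO.
  by exists U0; split.
have hO' : forall r', r' \in zs -> open (O r') /\ O r' !=set0.
  by move=> r' h; apply: hO; rewrite inE h orbT.
have [W0 [oW0 nW0 hW0]] := IH U0 oU nU hO'.
have [oOr nOr] := hO r (mem_head _ _).
have [n [n0 _ [y [Ory Wy]]]] := mm_use mm oOr nOr oW0 nW0 Sfam_Npos.
exists (O r `&` (Tz T Tinv n%:Z) @^-1` W0); split.
- apply: openI => //; apply: open_pre => //; exact: Tz_cont.
- by exists y.
move=> q [y' [[Ory' Wy'] [Orq Wq]]] r'; rewrite inE => /orP [/eqP ->|r'zs].
  by exists y'.
apply: (hW0 q) => //; exists (Tz T Tinv n%:Z y'); split => //.
by rewrite -(TzD K1 K2) addrC (TzD K1 K2).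
Qed.

Definition good (X : Type) (T Tinv : X -> X) (U V : set X) (w : int) :=
  exists x, U x /\ V (Tz T Tinv w x).

Lemma step (X : pseudoMetricType Rdefinitions.R) (T Tinv : X -> X) :
  cancel T Tinv -> cancel Tinv T -> continuous T -> continuous Tinv -> mild_mixing T ->
  forall (U V : set X) (u : int) (L : set nat), open U -> U !=set0 -> open V ->
  L `<=` Npos -> infinite_set L ->
  forall (zs : seq int) (m M : nat),
  (forall r, r \in zs -> good T Tinv U V (u + r) /\ SIPb L m r) ->
  exists p m', [/\ (0 < p)%N, (M < p)%N &
    forall r, r \in zs ++ map (fun r => r + p%:Z) zs ++ map (fun r => r - p%:Z) zs ->
      good T Tinv U V (u + r) /\ SIPb L m' r].
Proof.
move=> K1 K2 cT cTi mm U V u L oU nU oV Lpos infL zs m M hzs.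
pose O r := U `&` (Tz T Tinv (u + r)) @^-1` V.
have hO : forall r, r \in zs -> open (O r) /\ O r !=set0.
  move=> r /hzs [[x [Ux Vx]] _]; split; last by exists x.
  apply: openI => //; apply: open_pre => //; exact: Tz_cont.
have [W [oW nW hW]] := Wlem K1 K2 cT cTi mm oU nU hO.
have [Q [QL infQ Qm hQ]] := superinc m M infL.
have QNpos : Q `<=` Npos by move=> x /QL /Lpos.
have [n [n0 [_ sQn] [y [Wy Wny]]]] := mm_use mm oW nW oW nW (SIPL_Sfam QNpos infQ).
have hWn := hW n%:Z (ex_intro _ y (conj Wy Wny)).
have Mn : (M < n)%N by case: (hQ _ sQn); lia.
have [m' [s' [t' [us' ut' hs' ht' en]]]] := SIP_block QL Qm sQn.
pose m'' := maxn m m'.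
have hs'' : forall x, x \in s' -> [/\ L x, (m < x)%N & (x < m'')%N].
  by move=> x /hs' [Lx mx xm]; split => //; rewrite leq_max xm orbT.
have ht'' : forall x, x \in t' -> [/\ L x, (m < x)%N & (x < m'')%N].
  by move=> x /ht' [Lx mx xm]; split => //; rewrite leq_max xm orbT.
have mm'' : (m <= m'')%N by rewrite leq_max leqnn.
exists n, m''; split => // r'; rewrite !mem_cat => /orP [r'zs|/orP [/mapP [r rzs ->]|/mapP [r rzs ->]]].
- have [g sb] := hzs r' r'zs; split => //; exact: SIPb_mono sb.
- have [_ sb] := hzs r rzs.
  have [y' [[Uy Vy] [Uny Vny]]] := hWn r rzs.
  split; last by rewrite en; case: (SIPb_add mm'' sb us' ut' hs'' ht'').
  by exists y'; split => //; rewrite addrA (TzD K1 K2).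
- have [_ sb] := hzs r rzs.
  have [y' [[Uy Vy] [Uny Vny]]] := hWn r rzs.
  split; last by rewrite en; case: (SIPb_add mm'' sb us' ut' hs'' ht'').
  exists (Tz T Tinv n%:Z y'); split => //; rewrite -(TzD K1 K2).
  by have -> : u + (r - n%:Z) + n%:Z = u + r by lia.
Qed.

Lemma part1 : Mfam `<=` sharpF gammaS.
Proof.
move=> A [Apos [X [T [U [V [[_ _ [Tinv [K1 K2 cT cTi]]] mm [oU nU] [oV nV] NA]]]]]].
split => // B [Bpos [L [u [Lpos [infL hB]]]]].
pose V' := (Tz T Tinv u) @^-1` V.
have oV' : open V' by apply: open_pre => //; exact: Tz_cont.
have nV' : V' !=set0.
  have [v Vv] := nV; exists (Tz T Tinv (- u) v).
  by rewrite /V' /= -(TzD K1 K2) addrN.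
have [n1 [n10 [_ sLn] [x0 [Ux0 Vx0]]]] := mm_use mm oU nU oV' nV' (SIPL_Sfam Lpos infL).
have [m0 [s [t [us ut hs ht en]]]] :=
  SIP_block (Q := L) (L := L) (m := 0%N) (@subset_refl _ _) (fun x Lx => Lpos x Lx) sLn.
pose z0 : int := n1%:Z.
have SB0 : SIPb L m0 z0.
  exists s, t; split => //.
    by move=> x /hs [].
  by move=> x /ht [].
have G0 : good T Tinv U V (u + z0).
  by exists x0; split => //; rewrite (TzD K1 K2).
pose Inv (st : seq int * nat * nat) :=
  forall r, r \in st.1.1 -> good T Tinv U V (u + r) /\ SIPb L st.1.2 r.
pose Spec (st st' : seq int * nat * nat) := [/\ (0 < st'.2)%N, (st.2 < st'.2)%N,
  st'.1.1 = st.1.1 ++ map (fun r => r + (st'.2)%:Z) st.1.1 ++ map (fun r => r - (st'.2)%:Z) st.1.1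
  & Inv st'].
have ex : forall st, exists st', Inv st -> Spec st st'.
  move=> [[zs m] M]; case: (EM (Inv (zs, m, M))) => [hI|hI]; last by exists (zs, m, M).
  have [p [m' [p0 Mp hp]]] := step K1 K2 cT cTi mm oU nU oV Lpos infL M hI.
  by exists (zs ++ map (fun r => r + p%:Z) zs ++ map (fun r => r - p%:Z) zs, m', p).
have [f hf] := choice ex.
pose st k := iter k f ([:: z0], m0, 0%N).
have Ist : forall k, Inv (st k).
  elim=> [|k IH].
    by move=> r; rewrite inE => /eqP ->; split.
  by have [_ _ _ ] := hf _ IH.
pose p k := (st k.+1).2.
have Sst : forall k, [/\ (0 < p k)%N, ((st k).2 < p k)%N &
   (st k.+1).1.1 = (st k).1.1 ++ map (fun r => r + (p k)%:Z) (st k).1.1 ++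
                   map (fun r => r - (p k)%:Z) (st k).1.1].
  by move=> k; have [] := hf _ (Ist k).
have pk : forall k, (k < p k)%N.
  elim=> [|k IH]; first by case: (Sst 0%N).
  have [_ h _] := Sst k.+1; have : (st k.+1).2 = p k by [].
  move=> e; rewrite e in h; lia.
split; first by move=> x [/Apos].
exists [set x | exists i, x = p i], (u + z0); split.
  by move=> x [i ->]; have := pk i; rewrite /Npos /=; lia.
split.
  by apply: inf_unbounded => N; exists (p N); split; [exists N|exact: pk].
move=> n n0 [z [sz nz]].
have Pst : forall k r, r \in (st k).1.1 -> [/\ r \in (st k.+1).1.1,
    r + (p k)%:Z \in (st k.+1).1.1 & r - (p k)%:Z \in (st k.+1).1.1].
  move=> k r hr; have [_ _ ->] := Sst k; rewrite !mem_cat; split.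
  - by rewrite hr.
  - by rewrite (map_f (fun r => r + (p k)%:Z) hr) orbT.
  - by rewrite (map_f (fun r => r - (p k)%:Z) hr) !orbT.
have [K hK] := SIP_L1 (Q := [set x | exists i, x = p i]) (p := p)
  (P := fun k r => r \in (st k).1.1) (z0 := z0) (fun x h => h) (mem_head _ _) Pst
  (fun k r h => let: And3 a _ _ := Pst k r h in a) sz.
have [[x [Ux Vx]] sb] := Ist K _ hK.
have e : u + (z0 + z) = n%:Z by lia.
rewrite e in Vx.
split.
  apply: NA; split => //; exists (iter n T x); split => //; by exists x.
apply: hB => //; exists (z0 + z); split; first exact: SIPb_SIP sb.
lia.
Qed.

Theorem theorem5p2 :
  Mfam `<=` sharpF gammaS /\ sharpF gammaS = sharpF (gtilde (dualF Sfam)).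
Proof.
split; first exact: part1.
by rewrite gt_dual; apply: sharp_dual; exact: gammaS_up.
Qed.
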